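(* Let $x,y\in PSBT_n$ be distinct. If the vertices $x^v$ and $y^v$ of $\mathrm{PSB}(n)$ are not adjacent, then there exist at least two tours in $PSBT_n$, different from $x$ and $y$, all of whose arcs are arcs of the multigraph $x\cup y$.
   Context: Let $n\ge 3$ and let $D_n$ be the complete directed graph on the vertex set (cities) $\{1,\dots,n\}$ with arc set $E=\{(u,v):u\neq v\}$. A Hamiltonian tour is a directed Hamiltonian cycle in $D_n$; for a tour $\tau$, $\tau(i)$ denotes the successor of city $i$, and $\tau^k(i)$, $\tau^{-k}(i)$ denote the $k$-th successor and $k$-th predecessor of $i$. A city $i$ is a peak of $\tau$ if $\tau^{-1}(i)<i$ and $\tau(i)<i$. A city $i$ is a step-back peak of $\tau$ if either ($\tau^{-1}(i)<i$, $\tau(i)=i-1$ and $\tau^2(i)>i$) or ($\tau^{-2}(i)>i$, $\tau^{-1}(i)=i-1$ and $\tau(i)<i$). A proper peak is a peak that is not a step-back peak. A pyramidal tour with step-backs is a Hamiltonian tour whose only proper peak is $n$; $PSBT_n$ denotes the set of all such tours. For a tour $x$, $x^v\in\mathbb{R}^E$ is its characteristic vector ($x^v_e=1$ if arc $e$ belongs to $x$, and $0$ otherwise), and $\mathrm{PSB}(n)=\mathrm{conv}\{x^v: x\in PSBT_n\}$; its vertices are the vectors $x^v$, $x\in PSBT_n$. Two vertices are adjacent if the segment joining them is an edge (one-dimensional face) of $\mathrm{PSB}(n)$. For tours $x,y$, $x\cup y$ denotes the multigraph on $\{1,\dots,n\}$ containing all arcs of $x$ and all arcs of $y$ (arcs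 common to both counted twice). *)

(* Defs.v *)
(* Cities are 'I_n (city k of the paper is ordinal k-1). *)
From HB Require Import structures.
From mathcomp Require Import all_boot all_order all_algebra all_fingroup.
Set Implicit Arguments. Unset Strict Implicit. Unset Printing Implicit Defensive.
Import Order.TTheory GRing.Theory Num.Theory.

Section Defs.
Variable n : nat.

(* A Hamiltonian tour = successor permutation forming a single cycle. *)
Definition is_tour (s : {perm 'I_n}) : Prop :=
  forall i : 'I_n, porbit s i = [set: 'I_n].

Definition succ (s : {perm 'I_n}) (i : 'I_n) : 'I_n := s i.
Definition pred (s : {perm 'I_n}) (i : 'I_n) : 'I_n := (s^-1)%g i.

Definition is_peak (s : {perm 'I_n}) (i : 'I_n) : bool :=
  (pred s i < i)%N && (succ s i < i)%N.

Definition is_stepback_peak (s : {perm 'I_n}) (i : 'I_n) : bool :=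
  [&& (pred s i < i)%N, (succ s i).+1 == i :> nat & (i < succ s (succ s i))%N]
  || [&& (i < pred s (pred s i))%N, (pred s i).+1 == i :> nat & (succ s i < i)%N].

Definition is_proper_peak (s : {perm 'I_n}) (i : 'I_n) : bool :=
  is_peak s i && ~~ is_stepback_peak s i.

Definition psbt (s : {perm 'I_n}) : Prop :=
  is_tour s /\ forall i : 'I_n, is_proper_peak s i = (val i == n.-1).

Definition arc : Type := {e : 'I_n * 'I_n | e.1 != e.2}.

Variable R : realFieldType.
Local Open Scope ring_scope.

Definition charvec (s : {perm 'I_n}) : arc -> R :=
  fun e => if s (val e).1 == (val e).2 then 1 else 0.

Definition in_PSB (p : arc -> R) : Prop :=
  exists lam : {perm 'I_n} -> R,
    [/\ forall s, 0 <= lam s,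
        forall s, ~ psbt s -> lam s = 0,
        \sum_(s : {perm 'I_n}) lam s = 1
      & forall e, p e = \sum_(s : {perm 'I_n}) lam s * charvec s e].

Definition dotv (c p : arc -> R) : R := \sum_(e : arc) c e * p e.

Definition in_seg (a b p : arc -> R) : Prop :=
  exists t : R, [/\ 0 <= t, t <= 1 & forall e, p e = (1 - t) * a e + t * b e].

(* The segment [x^v, y^v] is a face of PSB(n): it is the set of maximisers in
   PSB(n) of some linear functional c. (With x <> y it is one-dimensional.) *)
Definition adjacent (x y : {perm 'I_n}) : Prop :=
  exists c : arc -> R,
    [/\ forall p, in_PSB p -> dotv c p <= dotv c (charvec x),
        forall p, in_PSB p -> dotv c p = dotv c (charvec x) ->
                  in_seg (charvec x) (charvec y) p
      & forall p, in_seg (charvec x) (charvec y) p ->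
                  in_PSB p /\ dotv c p = dotv c (charvec x)].
End Defs.

(* Main.v *)
Require Import Defs.
From HB Require Import structures.
From mathcomp Require Import all_boot all_order all_algebra all_fingroup.
From Stdlib Require Import Classical.
From mathcomp Require Import lra.
Set Implicit Arguments. Unset Strict Implicit. Unset Printing Implicit Defensive.
Import Order.TTheory GRing.Theory Num.Theory.

Section Aux2.
Variable n : nat.
Variable R : realFieldType.
Local Open Scope ring_scope.

Lemma no_fix (s : {perm 'I_n}) : is_tour s -> (1 < n)%N -> forall i, s i != i.
Proof.
move=> T n1 i; apply/eqP => si.
have n0 : (0 < n)%N by apply: ltnW.
pose j : 'I_n := if val i == 0%N then Ordinal n1 else Ordinal n0.
have ji : j != i.
  rewrite /j; case: (eqVneq (val i) 0%N) => E; apply/eqP => /(congr1 val) /= H.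
    by rewrite E in H.
  by rewrite H eqxx in E.
have : j \in porbit s i by rewrite T inE.
case/porbitP => k jk; move: ji; rewrite jk permX.
have It : forall k, iter k s i = i by elim => //= k' ->.
by rewrite It eqxx.
Qed.

Lemma dotv_sum (f : 'I_n -> 'I_n -> R) (s : {perm 'I_n}) :
  (forall i, s i != i) ->
  dotv (fun e : Defs.arc n => f (val e).1 (val e).2) (charvec R s) = \sum_i f i (s i).
Proof.
move=> nf; rewrite /dotv /charvec.
pose G (p : 'I_n * 'I_n) := f p.1 p.2 * (if s p.1 == p.2 then 1 else 0).
have -> : \sum_(e : Defs.arc n) f (val e).1 (val e).2 * (if s (val e).1 == (val e).2 then 1 else 0)
   = \sum_(p | p.1 != p.2) G p.
  symmetry; rewrite (reindex_omap (val : Defs.arc n -> _) insub); last first.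
    by move=> p pn; rewrite insubT.
  apply: eq_bigl => -[p pn] /=; by rewrite insubT /= pn eqxx.
rewrite big_mkcond /=.
rewrite (eq_bigr (fun p => G p)); last first.
  move=> [i j] _ /=; case: eqP => // E; rewrite /G /= E (negbTE (nf j)) mulr0 //.
rewrite -(pair_big xpredT xpredT (fun i j => G (i, j))) /=.
apply: eq_bigr => i _; rewrite (bigD1 (s i)) //= /G /= eqxx mulr1 big1 ?addr0 //.
by move=> j /negbTE; rewrite eq_sym => ->; rewrite mulr0.
Qed.
Lemma dotv_comb (c p : Defs.arc n -> R) (lam : {perm 'I_n} -> R) :
  (forall e, p e = \sum_s lam s * charvec R s e) ->
  dotv c p = \sum_s lam s * dotv c (charvec R s).
Proof.
move=> H; rewrite /dotv.
under eq_bigr do rewrite H mulr_sumr.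
rewrite exchange_big; apply: eq_bigr => s _; rewrite mulr_sumr.
by apply: eq_bigr => e _; rewrite mulrCA.
Qed.

Lemma face_lemma (c : Defs.arc n -> R) (x y : {perm 'I_n}) :
  psbt x -> psbt y ->
  (forall s, psbt s -> dotv c (charvec R s) <= dotv c (charvec R x)) ->
  (forall s, psbt s -> dotv c (charvec R s) = dotv c (charvec R x) -> s = x \/ s = y) ->
  dotv c (charvec R y) = dotv c (charvec R x) ->
  adjacent R x y.
Proof.
move=> px py Hle Heq Hy; exists c; split.
- move=> p [lam [l0 lnp l1 lp]].
  rewrite (dotv_comb c lp).
  rewrite -[X in _ <= X]mul1r -l1 mulr_suml.
  apply: ler_sum => s _.
  case: (classic (psbt s)) => [ps|nps].
    by apply: ler_wpM2l => //; apply: Hle.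
  by rewrite lnp // !mul0r.
- move=> p [lam [l0 lnp l1 lp]] Hp.
  have Hz : forall s, s != x -> s != y -> lam s = 0.
    move=> s sx sy.
    case: (classic (psbt s)) => [ps|nps]; last exact: lnp.
    have H0 : \sum_s0 lam s0 * (dotv c (charvec R x) - dotv c (charvec R s0)) = 0.
      under eq_bigr do rewrite mulrBr.
      rewrite sumrB -mulr_suml l1 mul1r -(dotv_comb c lp) Hp.
      by rewrite subrr.
    have Hnn : forall s0 : {perm 'I_n}, true -> 0 <= lam s0 * (dotv c (charvec R x) - dotv c (charvec R s0)).
      move=> s0 _; case: (classic (psbt s0)) => [ps0|nps0].
        by apply: mulr_ge0 => //; rewrite subr_ge0; apply: Hle.
      by rewrite lnp // mul0r.
    have := (@psumr_eq0P _ _ _ _ Hnn H0 s isT).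
    have Hlt : dotv c (charvec R s) != dotv c (charvec R x).
      apply/eqP => E; case: (Heq s ps E) => E'; [by rewrite E' eqxx in sx|by rewrite E' eqxx in sy].
    move/eqP; rewrite mulf_eq0 => /orP[/eqP //|]; by rewrite subr_eq0 eq_sym (negbTE Hlt).
  case: (eqVneq x y) => [exy|nxy].
  + subst y. exists 0; split => // e; rewrite lp (bigD1 x) //= big1 ?addr0.
      have : \sum_s lam s = lam x by rewrite (bigD1 x) //= big1 ?addr0 // => s sx; apply: Hz.
      by rewrite l1 => <-; rewrite subr0 mul0r addr0.
    by move=> s sx; rewrite Hz ?mul0r.
  + have Hs : forall (F : {perm 'I_n} -> R), \sum_s lam s * F s = lam x * F x + lam y * F y.
      move=> F; rewrite (bigD1 x) //= (bigD1 y) 1?eq_sym //= big1 ?addr0 //.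
      by move=> s /andP[sy sx]; rewrite Hz ?mul0r.
    have Hl : lam x + lam y = 1.
      by rewrite -l1; have := Hs (fun _ => 1); rewrite !mulr1 => <-; apply: eq_bigr => s _; rewrite mulr1.
    exists (lam y); split.
    * by apply: l0.
    * by rewrite -Hl lerDr l0.
    * by move=> e; rewrite lp Hs -Hl addrK.
- move=> p [t [t0 t1 pt]].
  set lam := fun s : {perm 'I_n} => (if s == x then 1 - t else 0) + (if s == y then t else 0).
  have Hs : forall (F : {perm 'I_n} -> R), \sum_s lam s * F s = (1 - t) * F x + t * F y.
    move=> F; rewrite /lam; under eq_bigr do rewrite mulrDl.
    rewrite big_split /=; congr (_ + _).
      rewrite (bigD1 x) //= eqxx big1 ?addr0 // => s /negbTE ->; by rewrite mul0r.
    rewrite (bigD1 y) //= eqxx big1 ?addr0 // => s /negbTE ->; by rewrite mul0r.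
  have lp : forall e, p e = \sum_s lam s * charvec R s e.
    by move=> e; rewrite Hs pt.
  split.
    exists lam; split.
    + move=> s; rewrite /lam; apply: addr_ge0; case: ifP => // _; by rewrite subr_ge0.
    + move=> s nps; rewrite /lam; case: eqP => [E|_]; first by rewrite E in nps.
      by case: eqP => [E|_]; [rewrite E in nps|rewrite addr0].
    + by rewrite -(eq_bigr _ (fun s _ => mulr1 (lam s))) Hs !mulr1 subrK.
    + exact: lp.
  rewrite (dotv_comb c lp) Hs Hy.
  by rewrite -mulrDl subrK mul1r.
Qed.

Definition gfun (x y : {perm 'I_n}) (i0 i1 i j : 'I_n) : bool :=
  ((i == i0) && (j == x i0)) || ((i == i1) && (j == y i1)).

Definition ffun (x y : {perm 'I_n}) (i0 i1 i j : 'I_n) : R :=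
  if (j == x i) || (j == y i) then (gfun x y i0 i1 i j)%:R else -3.

Lemma sum_delta (a : 'I_n) : \sum_i ((i == a)%:R : R) = 1.
Proof.
by rewrite (bigD1 a) //= eqxx big1 ?addr0 // => i /negbTE ->.
Qed.

Lemma adj_of (x y : {perm 'I_n}) (i0 i1 : 'I_n) :
  (1 < n)%N -> psbt x -> psbt y ->
  (x i1 = y i1 -> i1 = i0) -> (y i0 = x i0 -> i0 = i1) ->
  (forall s, psbt s -> (forall i, s i = x i \/ s i = y i) ->
     [\/ s = x, s = y | forall i, gfun x y i0 i1 i (s i) = false]) ->
  adjacent R x y.
Proof.
move=> n1 px py Hx1 Hy0 Hs.
set f := ffun x y i0 i1.
have V : forall s, psbt s -> dotv (fun e : Defs.arc n => f (val e).1 (val e).2) (charvec R s)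
                            = \sum_i f i (s i).
  by move=> s ps; apply: dotv_sum; apply: no_fix => //; case: ps.
have gx : forall i, gfun x y i0 i1 i (x i) = (i == i0).
  move=> i; rewrite /gfun; case: (eqVneq i i0) => [->|ni0]; first by rewrite eqxx.
  rewrite /=; case: (eqVneq i i1) => [E|//]; subst i.
  by rewrite /=; apply/negbTE; apply/eqP => /Hx1 E; rewrite E eqxx in ni0.
have gy : forall i, gfun x y i0 i1 i (y i) = (i == i1).
  move=> i; rewrite /gfun; case: (eqVneq i i1) => [->|ni1]; first by rewrite eqxx orbT.
  rewrite /= orbF; case: (eqVneq i i0) => [E|//]; subst i.
  by rewrite /=; apply/negbTE; apply/eqP => /Hy0 E; rewrite E eqxx in ni1.
have Vx : \sum_i f i (x i) = 1.
  rewrite -(sum_delta i0); apply: eq_bigr => i _; by rewrite /f /ffun eqxx /= gx.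
have Vy : \sum_i f i (y i) = 1.
  rewrite -(sum_delta i1); apply: eq_bigr => i _; by rewrite /f /ffun eqxx orbT gy.
have fle : forall i j, f i j <= (i == i0)%:R + (i == i1)%:R.
  move=> i j; rewrite /f /ffun /gfun.
  case: ifP => _; last by rewrite -natrD; apply: (le_trans (y := 0)); [lra| apply: ler0n].
  by case: (i == i0); case: (i == i1); case: (j == x i0); case: (j == y i1) => /=;
     rewrite ?add0r ?addr0 ?ler01 ?lexx // ?ler0n //; lra.
have Vs : forall s, psbt s -> \sum_i f i (s i) < 1 \/ s = x \/ s = y.
  move=> s ps.
  case: (classic (forall i, s i = x i \/ s i = y i)) => [ins|nins].
    case: (Hs s ps ins) => [->|->|Hg]; [by right; left|by right; right|left].
    rewrite big1 ?ltr01 // => i _; rewrite /f /ffun Hg.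
    by case: (ins i) => ->; rewrite eqxx ?orbT.
  left; have [i2 Hi2] := not_all_ex_not _ _ nins.
  have [n2x n2y] := not_or_and _ _ Hi2.
  rewrite (bigD1 i2) //=.
  have -> : f i2 (s i2) = -3.
    rewrite /f /ffun; case: ifP => // /orP[/eqP //|/eqP //].
  have : \sum_(i | i != i2) f i (s i) <= 2.
    apply: (le_trans (y := \sum_(i | i != i2) ((i == i0)%:R + (i == i1)%:R))).
      by apply: ler_sum => i _; apply: fle.
    apply: (le_trans (y := \sum_i (((i == i0)%:R : R) + (i == i1)%:R))).
      rewrite [X in _ <= X](bigD1 i2) //= lerDr.
      by apply: addr_ge0; apply: ler0n.
    by rewrite big_split /= !sum_delta.
  lra.
apply: (face_lemma (c := fun e : Defs.arc n => f (val e).1 (val e).2)) => //.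
- move=> s ps; rewrite !V // Vx.
  case: (Vs s ps) => [/ltW //|[->|->]]; by rewrite ?Vx ?Vy.
- move=> s ps; rewrite !V // Vx => E.
  case: (Vs s ps) => [|//]; by rewrite E ltxx.
- by rewrite !V // Vx Vy.
Qed.
End Aux2.

Theorem lemma2 (n : nat) (R : realFieldType) (x y : {perm 'I_n}) :
  (3 <= n)%N -> psbt x -> psbt y -> x <> y ->
  ~ adjacent R x y ->
  exists z1 z2 : {perm 'I_n},
    [/\ psbt z1, psbt z2, z1 <> z2,
        [/\ z1 <> x, z1 <> y, z2 <> x & z2 <> y]
      & forall i : 'I_n, (z1 i = x i \/ z1 i = y i) /\ (z2 i = x i \/ z2 i = y i)].
Proof.
move=> n3 px py nxy nadj.
have n1 : (1 < n)%N by apply: ltnW.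
have n0 : (0 < n)%N by apply: ltnW.
case: (classic (exists z, [/\ psbt z, z <> x, z <> y & forall i, z i = x i \/ z i = y i]))
  => [[z [pz zx zy zs]] | noz].
- case: (classic (exists z2, [/\ psbt z2, z2 <> x, z2 <> y, z2 <> z
                               & forall i, z2 i = x i \/ z2 i = y i]))
    => [[z2 [p2 z2x z2y z2z z2s]]|noz2].
    exists z, z2; split => //.
      by move=> E; apply: z2z; rewrite E.
  exfalso; apply: nadj.
  have [i0 Hi0] : exists i, z i <> x i.
    apply: not_all_ex_not => H; apply: zx; apply/permP => i; exact: H.
  have [i1 Hi1] : exists i, z i <> y i.
    apply: not_all_ex_not => H; apply: zy; apply/permP => i; exact: H.
  have zi0 : z i0 = y i0 by case: (zs i0).
  have zi1 : z i1 = x i1 by case: (zs i1).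
  apply: (@adj_of n R x y i0 i1) => //.
  + by move=> E; exfalso; apply: Hi1; rewrite zi1 E.
  + by move=> E; exfalso; apply: Hi0; rewrite zi0 E.
  + move=> s ps ss.
    case: (classic (s = x)) => [->|sx]; first by constructor 1.
    case: (classic (s = y)) => [->|sy]; first by constructor 2.
    case: (classic (s = z)) => [->|sz]; last first.
      by exfalso; apply: noz2; exists s.
    constructor 3 => i; rewrite /gfun.
    apply/negbTE; apply/negP => /orP[/andP[/eqP E1 /eqP E2]|/andP[/eqP E1 /eqP E2]];
      subst i; [exact: Hi0|exact: Hi1].
- exfalso; apply: nadj.
  apply: (@adj_of n R x y (Ordinal n0) (Ordinal n0)) => //.
  move=> s ps ss.
  case: (classic (s = x)) => [->|sx]; first by constructor 1.
  case: (classic (s = y)) => [->|sy]; first by constructor 2.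
  by exfalso; apply: noz; exists s.
Qed.
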